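(* If $G$ and $H$ are almost-3-symmetric graphs, each with at least 3 vertices, then $\mathrm{Inflate}(G,H)$ is almost-3-symmetric.
   Context: All graphs are finite and simple. For a graph $G$ on $n$ vertices and a graph $F$ on $k$ vertices, the density $t(F,G)$ is the number of $k$-element subsets $S\subseteq V(G)$ whose induced subgraph is isomorphic to $F$, divided by $\binom{n}{k}$. $K_2$ is the single edge, $K_3$ the triangle, $P_3$ the path with 3 vertices and 2 edges, $K_2\cup K_1$ the 3-vertex graph with exactly one edge, and $\overline{K_3}$ the 3-vertex graph with no edges. A graph $G$ with at least 3 vertices is almost-3-symmetric if $t(K_2,G)=1/2$, $t(K_3,G)=t(\overline{K_3},G)$, and $t(P_3,G)=t(K_2\cup K_1,G)$. The inflation $\mathrm{Inflate}(G,H)$ (lexicographic product) is the graph with vertex set $V(G)\times V(H)$ in which $(g,h)$ and $(g',h')$ are adjacent iff either $g$ and $g'$ are adjacent in $G$, or $g=g'$ and $h,h'$ are adjacent in $H$. *)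

(* Defs.v *)
From mathcomp Require Import all_boot all_order all_algebra.
Set Implicit Arguments. Unset Strict Implicit. Unset Printing Implicit Defensive.
Import GRing.Theory Num.Theory.
Local Open Scope ring_scope.

Definition simple_graph (T : finType) (e : rel T) : Prop :=
  symmetric e /\ irreflexive e.

Definition induces_iso (T : finType) (e : rel T) (k : nat) (F : rel 'I_k)
  (S : {set T}) : bool :=
  [exists f : {ffun 'I_k -> T}, [&& injectiveb f, f @: setT == S &
    [forall i, forall j, e (f i) (f j) == F i j]]].

Definition density (T : finType) (e : rel T) (k : nat) (F : rel 'I_k) : rat :=
  (#|[set S : {set T} | (#|S| == k) && induces_iso e F S]|%:R)
    / ('C(#|T|, k))%:R.

Definition K2 : rel 'I_2 := fun i j => i != j.
Definition K3 : rel 'I_3 := fun i j => i != j.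
Definition coK3 : rel 'I_3 := fun _ _ => false.
Definition P3 : rel 'I_3 := fun i j =>
  ((val i == 1%N) && (val j != 1%N)) || ((val j == 1%N) && (val i != 1%N)).
Definition K2K1 : rel 'I_3 := fun i j =>
  ((val i == 0%N) && (val j == 1%N)) || ((val i == 1%N) && (val j == 0%N)).

Definition almost3sym (T : finType) (e : rel T) : Prop :=
  (3 <= #|T|)%N /\
  density e K2 = 1 / 2%:R /\
  density e K3 = density e coK3 /\
  density e P3 = density e K2K1.

Definition inflate (T U : finType) (eG : rel T) (eH : rel U) : rel (T * U) :=
  fun x y => eG x.1 y.1 || ((x.1 == y.1) && eH x.2 y.2).

(* Main.v *)
Require Import Defs.
From mathcomp Require Import all_boot all_order all_algebra.
From mathcomp Require Import ring zify.
Set Implicit Arguments. Unset Strict Implicit. Unset Printing Implicit Defensive.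
Import GRing.Theory Num.Theory.

Definition goodf (T : finType) (e: rel T) k (F : rel 'I_k) (f : {ffun 'I_k -> T}) : bool :=
  injectiveb f && [forall i, forall j, e (f i) (f j) == F i j].
Definition mapc (T : finType) (e: rel T) k (F : rel 'I_k) : nat :=
  #|[set f : {ffun 'I_k -> T} | goodf e F f]|.
Definition setc (T : finType) (e: rel T) k (F : rel 'I_k) : nat :=
  #|[set S : {set T} | (#|S| == k) && induces_iso e F S]|.

Lemma sum_pick (T : finType) (x : T) (F : T -> nat) :
  (forall y, y != x -> F y = 0) -> \sum_y F y = F x.
Proof. move=> H; rewrite (bigD1 x) //= big1 ?addn0 // => y; exact: H. Qed.

Lemma sum_bool (T : finType) (P : pred T) :
  \sum_i ((P i : bool) : nat) = #|[set i | P i]|.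
Proof.
rewrite -sum1_card [RHS]big_mkcond /=; apply: eq_bigr => i _; rewrite inE; by case: (P i).
Qed.

Lemma inj_le (X Y : finType) (A : {set X}) (B : {set Y}) (h : X -> Y) :
  {in A &, injective h} -> {in A, forall x, h x \in B} -> #|A| <= #|B|.
Proof.
move=> hi hAB; rewrite -(card_in_imset hi); apply: subset_leq_card.
by apply/subsetP => y /imsetP [x xA ->]; exact: hAB.
Qed.

Lemma inducesE (T : finType) (e: rel T) k (F : rel 'I_k) S :
  induces_iso e F S = [exists f, goodf e F f && (f @: setT == S)].
Proof.
rewrite /induces_iso /goodf; apply/existsP/existsP => [][f Hf]; exists f; move: Hf.
  by case/and3P => -> -> ->.
by case/andP => /andP [-> ->] ->.
Qed.

Definition aut k (F : rel 'I_k) := [set s : {ffun 'I_k -> 'I_k} | goodf F F s].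

Lemma per_S (T : finType) (e: rel T) k (F : rel 'I_k) (S : {set T}) :
  #|[set f | goodf e F f && (f @: setT == S)]| = induces_iso e F S * #|aut F|.
Proof.
rewrite inducesE; case: existsP => [[f0 /andP [g0 /eqP im0]] | nex]; last first.
  rewrite mul0n; apply/eqP; rewrite cards_eq0; apply/eqP/setP => f.
  rewrite !inE; apply/negP => Hf; apply: nex; by exists f.
rewrite mul1n.
move: (g0) => /andP [/injectiveP inj0 /forallP pres0].
have pres0' : forall i j, e (f0 i) (f0 j) = F i j.
  by move=> i j; move: (pres0 i) => /forallP /(_ j) /eqP.
apply/eqP; rewrite eqn_leq; apply/andP; split.
-
  pose sg (f : {ffun 'I_k -> T}) := [ffun i => odflt i [pick j | f0 j == f i]].
  have sgE : forall f : {ffun 'I_k -> T}, f @: setT = S -> forall i, f0 (sg f i) = f i.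
    move=> f imf i; rewrite ffunE; case: pickP => [j /eqP //| H].
    have : f i \in S by rewrite -imf; apply/imsetP; exists i.
    rewrite -im0 => /imsetP [j _ Hj]; by move: (H j); rewrite Hj eqxx.
  apply: (@inj_le _ _ _ _ sg).
    move=> f1 f2; rewrite !inE => /andP [_ /eqP i1] /andP [_ /eqP i2] E.
    apply/ffunP => i; by rewrite -(sgE _ i1) -(sgE _ i2) E.
  move=> f; rewrite !inE => /andP [/andP [/injectiveP injf /forallP presf] /eqP imf].
  have presf' : forall i j, e (f i) (f j) = F i j.
    by move=> i j; move: (presf i) => /forallP /(_ j) /eqP.
  rewrite /goodf; apply/andP; split.
    apply/injectiveP => i j E; apply: injf; by rewrite -!(sgE _ imf) E.
  apply/forallP => i; apply/forallP => j; by rewrite -pres0' !(sgE _ imf) presf'.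
- pose cm (s : {ffun 'I_k -> 'I_k}) := [ffun i => f0 (s i)].
  apply: (@inj_le _ _ _ _ cm).
    move=> s1 s2 _ _ E; apply/ffunP => i; apply: inj0.
    by move/ffunP: E => /(_ i); rewrite !ffunE.
  move=> s; rewrite !inE => /andP [/injectiveP injs /forallP press].
  have press' : forall i j, F (s i) (s j) = F i j.
    by move=> i j; move: (press i) => /forallP /(_ j) /eqP.
  apply/andP; split; last first.
    have -> : cm s @: setT = f0 @: (s @: setT).
      by rewrite -imset_comp; apply: eq_imset => i; rewrite ffunE.
    have -> : s @: setT = setT.
      apply/eqP; rewrite eqEcard subsetT /= (card_imset _ injs); exact: leqnn.
    exact/eqP.
  apply/andP; split.
  + apply/injectiveP => i j; rewrite !ffunE => /inj0; exact: injs.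
  + apply/forallP => i; apply/forallP => j; by rewrite !ffunE pres0' press'.
Qed.

Lemma setc_aut (T : finType) (e: rel T) k (F : rel 'I_k) :
  setc e F * #|aut F| = mapc e F.
Proof.
rewrite /mapc -[X in _ = X]sum_bool.
have E : forall f : {ffun 'I_k -> T}, (goodf e F f : nat) =
   \sum_(S : {set T}) ((f @: setT == S) * goodf e F f).
  move=> f; rewrite (@sum_pick _ (f @: setT)) ?eqxx ?mul1n // => S nS.
  by rewrite eq_sym (negbTE nS).
under eq_bigr => f _ do rewrite E. rewrite exchange_big /=.
rewrite /setc -sum_bool big_distrl /=; apply: eq_bigr => S _.
have -> : ((#|S| == k) && induces_iso e F S) = induces_iso e F S.
  case I: (induces_iso e F S); rewrite ?andbF ?andbT //.
  move: I; rewrite inducesE => /existsP [f /andP [/andP [/injectiveP injf _] /eqP <-]].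
  rewrite (card_imset _ injf) cardsT card_ord; exact: eqxx.
rewrite -per_S -sum_bool; apply: eq_bigr => f _.
by case: (goodf e F f); case: (_ == S).
Qed.

Definition Ind (T : finType) (e : rel T) a b c (x y z : T) : nat :=
  [&& x != y, x != z, y != z, e x y == a, e x z == b & e y z == c].
Definition Cnt (T : finType) (e : rel T) a b c : nat :=
  \sum_x \sum_y \sum_z Ind e a b c x y z.
Definition Dn (T : finType) (e : rel T) a : nat :=
  \sum_x \sum_y ((x != y) && (e x y == a) : nat).

Definition i0 : 'I_3 := @Ordinal 3 0 isT.
Definition i1 : 'I_3 := @Ordinal 3 1 isT.
Definition i2 : 'I_3 := @Ordinal 3 2 isT.
Definition j0 : 'I_2 := @Ordinal 2 0 isT.
Definition j1 : 'I_2 := @Ordinal 2 1 isT.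

Lemma I3cases (i : 'I_3) : i = i0 \/ i = i1 \/ i = i2.
Proof.
case: i => [[|[|[|n]]] Hn]; [left|right;left|right;right|done]; exact: val_inj.
Qed.
Lemma I2cases (i : 'I_2) : i = j0 \/ i = j1.
Proof. case: i => [[|[|n]] Hn]; [left|right|done]; exact: val_inj. Qed.

Lemma forall_I3 (P : pred 'I_3) : [forall i, P i] = [&& P i0, P i1 & P i2].
Proof.
apply/forallP/and3P => [H|[H0 H1 H2] i]; first by split.
by case: (I3cases i) => [->|[->|->]].
Qed.
Lemma forall_I2 (P : pred 'I_2) : [forall i, P i] = P j0 && P j1.
Proof.
apply/forallP/andP => [H|[H0 H1] i]; first by split.
by case: (I2cases i) => [->|->].
Qed.

Lemma inj3 (T : finType) (f : {ffun 'I_3 -> T}) :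
  injectiveb f = [&& f i0 != f i1, f i0 != f i2 & f i1 != f i2].
Proof.
apply/injectiveP/and3P => [inj|[h01 h02 h12] i j].
  by split; apply/eqP => /inj /(congr1 val).
case: (I3cases i) => [->|[->|->]]; case: (I3cases j) => [->|[->|->]] // E;
  by move: h01 h02 h12; rewrite E ?eqxx.
Qed.
Lemma inj2 (T : finType) (f : {ffun 'I_2 -> T}) :
  injectiveb f = (f j0 != f j1).
Proof.
apply/injectiveP/idP => [inj|h01 i j].
  by apply/eqP => /inj /(congr1 val).
case: (I2cases i) => [->|->]; case: (I2cases j) => [->|->] // E;
  by move: h01; rewrite E ?eqxx.
Qed.

Definition mk3 (T : finType) (t : T * T * T) : {ffun 'I_3 -> T} :=
  [ffun i : 'I_3 => if val i == 0 then t.1.1 else if val i == 1 then t.1.2 else t.2].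
Definition un3 (T : finType) (f : {ffun 'I_3 -> T}) := (f i0, f i1, f i2).
Definition mk2 (T : finType) (t : T * T) : {ffun 'I_2 -> T} :=
  [ffun i : 'I_2 => if val i == 0 then t.1 else t.2].
Definition un2 (T : finType) (f : {ffun 'I_2 -> T}) := (f j0, f j1).

Lemma mk3K (T : finType) : cancel (@un3 T) (@mk3 T).
Proof. move=> f; apply/ffunP => i; rewrite ffunE; by case: (I3cases i) => [->|[->|->]]. Qed.
Lemma un3K (T : finType) : cancel (@mk3 T) (@un3 T).
Proof. by case=> [[x y] z]; rewrite /un3 !ffunE. Qed.
Lemma mk2K (T : finType) : cancel (@un2 T) (@mk2 T).
Proof. move=> f; apply/ffunP => i; rewrite ffunE; by case: (I2cases i) => [->|->]. Qed.
Lemma un2K (T : finType) : cancel (@mk2 T) (@un2 T).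
Proof. by case=> [x y]; rewrite /un2 !ffunE. Qed.

Lemma mapc3 (T : finType) (e : rel T) (F : rel 'I_3) :
  symmetric e -> irreflexive e -> symmetric F -> irreflexive F ->
  mapc e F = Cnt e (F i0 i1) (F i0 i2) (F i1 i2).
Proof.
move=> se ie sF iF.
rewrite /mapc -sum_bool (reindex (@mk3 T)) /=; last first.
  by apply: onW_bij; exists (@un3 T); [exact: un3K | exact: mk3K].
rewrite /Cnt [RHS]pair_bigA [RHS]pair_bigA /=.
apply: eq_bigr => [[[x y] z]] _ /=.
rewrite /goodf inj3 !forall_I3 !ffunE /= /Ind.
rewrite !iF !ie [e y x]se [e z x]se [e z y]se [F i1 i0]sF [F i2 i0]sF [F i2 i1]sF.
by case: (x == y); case: (x == z); case: (y == z); case: (e x y == _);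
   case: (e x z == _); case: (e y z == _).
Qed.

Lemma mapc2 (T : finType) (e : rel T) (F : rel 'I_2) :
  symmetric e -> irreflexive e -> symmetric F -> irreflexive F ->
  mapc e F = Dn e (F j0 j1).
Proof.
move=> se ie sF iF.
rewrite /mapc -sum_bool (reindex (@mk2 T)) /=; last first.
  by apply: onW_bij; exists (@un2 T); [exact: un2K | exact: mk2K].
rewrite /Dn [RHS]pair_bigA /=.
apply: eq_bigr => [[x y]] _ /=.
rewrite /goodf inj2 !forall_I2 !ffunE /=.
rewrite !iF !ie [e y x]se [F j1 j0]sF.
by case: (x == y); case: (e x y == _).
Qed.

Ltac i3 := let i := fresh in let j := fresh in move=> i j;
  case: (I3cases i) => [->|[->|->]]; case: (I3cases j) => [->|[->|->]].
Ltac i3' := let i := fresh in move=> i;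
  case: (I3cases i) => [->|[->|->]].

Lemma symK3 : symmetric K3. Proof. i3; by []. Qed.
Lemma irrK3 : irreflexive K3. Proof. i3'; by []. Qed.
Lemma symcoK3 : symmetric coK3. Proof. i3; by []. Qed.
Lemma irrcoK3 : irreflexive coK3. Proof. i3'; by []. Qed.
Lemma symP3 : symmetric P3. Proof. i3; by []. Qed.
Lemma irrP3 : irreflexive P3. Proof. i3'; by []. Qed.
Lemma symK2K1 : symmetric K2K1. Proof. i3; by []. Qed.
Lemma irrK2K1 : irreflexive K2K1. Proof. i3'; by []. Qed.
Lemma symK2 : symmetric K2. Proof. move=> i j; case: (I2cases i) => ->; case: (I2cases j) => ->; by []. Qed.
Lemma irrK2 : irreflexive K2. Proof. move=> i; case: (I2cases i) => ->; by []. Qed.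

Lemma aut_mapc k (F : rel 'I_k) : #|aut F| = mapc F F.
Proof. by rewrite /aut /mapc. Qed.
Lemma autK3 : #|aut K3| = 6.
Proof. rewrite aut_mapc (@mapc3 _ K3 K3 symK3 irrK3 symK3 irrK3).
rewrite /Cnt !big_ord_recr !big_ord0 /=. by []. Qed.
Lemma autcoK3 : #|aut coK3| = 6.
Proof. rewrite aut_mapc (@mapc3 _ coK3 coK3 symcoK3 irrcoK3 symcoK3 irrcoK3).
rewrite /Cnt !big_ord_recr !big_ord0 /=. by []. Qed.
Lemma autP3 : #|aut P3| = 2.
Proof. rewrite aut_mapc (@mapc3 _ P3 P3 symP3 irrP3 symP3 irrP3).
rewrite /Cnt !big_ord_recr !big_ord0 /=. by []. Qed.
Lemma autK2K1 : #|aut K2K1| = 2.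
Proof. rewrite aut_mapc (@mapc3 _ K2K1 K2K1 symK2K1 irrK2K1 symK2K1 irrK2K1).
rewrite /Cnt !big_ord_recr !big_ord0 /=. by []. Qed.
Lemma autK2 : #|aut K2| = 2.
Proof. rewrite aut_mapc (@mapc2 _ K2 K2 symK2 irrK2 symK2 irrK2).
rewrite /Dn !big_ord_recr !big_ord0 /=. by []. Qed.


Lemma sumc (T : finType) (c : nat) : \sum_(y : T) c = #|T| * c.
Proof. by rewrite sum_nat_const cardT. Qed.

Lemma sum3_mull (U : finType) (F : U -> U -> U -> nat) c :
  \sum_h1 \sum_h2 \sum_h3 (F h1 h2 h3 * c) = (\sum_h1 \sum_h2 \sum_h3 F h1 h2 h3) * c.
Proof.
rewrite big_distrl; apply: eq_bigr => ? _; rewrite big_distrl; apply: eq_bigr => ? _.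
by rewrite big_distrl.
Qed.
Lemma drop3 (U : finType) (f : U -> U -> nat) :
  \sum_h1 \sum_h2 \sum_(h3 : U) f h1 h2 = #|U| * \sum_h1 \sum_h2 f h1 h2.
Proof.
rewrite big_distrr; apply: eq_bigr => ? _; rewrite big_distrr; apply: eq_bigr => ? _.
exact: sumc.
Qed.
Lemma drop2 (U : finType) (f : U -> U -> nat) :
  \sum_h1 \sum_(h2 : U) \sum_h3 f h1 h3 = #|U| * \sum_h1 \sum_h3 f h1 h3.
Proof. rewrite big_distrr; apply: eq_bigr => ? _; exact: sumc. Qed.
Lemma drop1 (U : finType) (f : U -> U -> nat) :
  \sum_(h1 : U) \sum_h2 \sum_h3 f h2 h3 = #|U| * \sum_h2 \sum_h3 f h2 h3.
Proof. exact: sumc. Qed.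
Lemma const3 (U : finType) c :
  \sum_(h1 : U) \sum_(h2 : U) \sum_(h3 : U) c = #|U| ^ 3 * c.
Proof.
rewrite (drop1 (fun _ _ => c)) (eq_bigr _ (fun h _ => sumc U c)) sumc; ring.
Qed.

Lemma Ind0_12 (T : finType) (e : rel T) a b c x z : Ind e a b c x x z = 0.
Proof. by rewrite /Ind eqxx. Qed.
Lemma Ind0_13 (T : finType) (e : rel T) a b c x y : Ind e a b c x y x = 0.
Proof. by rewrite /Ind eqxx andbF. Qed.
Lemma Ind0_23 (T : finType) (e : rel T) a b c x y : Ind e a b c x y y = 0.
Proof. by rewrite /Ind eqxx !andbF. Qed.

Lemma sum_pair (T U : finType) (F : T * U -> nat) :
  \sum_x F x = \sum_g \sum_h F (g, h).
Proof. by rewrite [RHS]pair_bigA; apply: eq_bigr => -[g h] _. Qed.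

Lemma reorder (T U : finType) (F : T * U -> T * U -> T * U -> nat) :
  \sum_x \sum_y \sum_z F x y z =
  \sum_g1 \sum_g2 \sum_g3 \sum_h1 \sum_h2 \sum_h3 F (g1, h1) (g2, h2) (g3, h3).
Proof.
rewrite sum_pair.
transitivity (\sum_g1 \sum_h1 \sum_g2 \sum_h2 \sum_g3 \sum_h3 F (g1,h1) (g2,h2) (g3,h3)).
  apply: eq_bigr => g1 _; apply: eq_bigr => h1 _; rewrite sum_pair.
  apply: eq_bigr => g2 _; apply: eq_bigr => h2 _; by rewrite sum_pair.
apply: eq_bigr => g1 _; rewrite exchange_big; apply: eq_bigr => g2 _.
transitivity (\sum_h1 \sum_g3 \sum_h2 \sum_h3 F (g1,h1) (g2,h2) (g3,h3)).
  apply: eq_bigr => h1 _; exact: exchange_big.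
exact: exchange_big.
Qed.

Lemma Vform (T U : finType) (eG : rel T) (eH : rel U) a b c g1 g2 g3 :
  symmetric eG -> irreflexive eG ->
  \sum_h1 \sum_h2 \sum_h3 Ind (inflate eG eH) a b c (g1,h1) (g2,h2) (g3,h3) =
    (g1 == g2) * ((g2 == g3) * Cnt eH a b c)
  + (g1 == g2) * (((g1 != g3) && (eG g1 g3 == b)) * ((b == c) * (Dn eH a * #|U|)))
  + (g1 == g3) * (((g1 != g2) && (eG g1 g2 == a)) * ((a == c) * (Dn eH b * #|U|)))
  + (g2 == g3) * (((g1 != g2) && (eG g1 g2 == a)) * ((a == b) * (Dn eH c * #|U|)))
  + Ind eG a b c g1 g2 g3 * #|U| ^ 3.
Proof.
move=> sG iG.
case: (eqVneq g1 g2) => [<- | n12].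
  case: (eqVneq g1 g3) => [<- | n13].
  - rewrite Ind0_12 /=.
    have -> : \sum_h1 \sum_h2 \sum_h3 Ind (inflate eG eH) a b c (g1,h1) (g1,h2) (g1,h3)
       = Cnt eH a b c.
      apply: eq_bigr => h1 _; apply: eq_bigr => h2 _; apply: eq_bigr => h3 _.
      by rewrite /Ind /inflate /= !xpair_eqE eqxx iG.
    ring.
  - rewrite ?eqxx ?(negbTE n13) Ind0_12 /=.
    have -> : \sum_h1 \sum_h2 \sum_h3 Ind (inflate eG eH) a b c (g1,h1) (g1,h2) (g3,h3)
       = \sum_h1 \sum_h2 \sum_(h3 : U) ((((h1 != h2) && (eH h1 h2 == a)) : nat) *
            ((((g1 != g3) && (eG g1 g3 == b)) : nat) * (b == c))).
      apply: eq_bigr => h1 _; apply: eq_bigr => h2 _; apply: eq_bigr => h3 _.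
      rewrite /Ind /inflate /= !xpair_eqE ?eqxx iG ?(negbTE n13) /=.
      by case: (h1 == h2); case: (eH h1 h2); case: (eG g1 g3); case: a; case: b; case: c.
    rewrite sum3_mull drop3 -/(Dn eH a) n13 /=; ring.
case: (eqVneq g1 g3) => [<- | n13].
  - rewrite ?eqxx ?(negbTE n12) [g2 == g1]eq_sym ?(negbTE n12) Ind0_13 /=.
    have -> : \sum_h1 \sum_h2 \sum_h3 Ind (inflate eG eH) a b c (g1,h1) (g2,h2) (g1,h3)
       = \sum_h1 \sum_(h2 : U) \sum_h3 ((((h1 != h3) && (eH h1 h3 == b)) : nat) *
            ((((g1 != g2) && (eG g1 g2 == a)) : nat) * (a == c))).
      apply: eq_bigr => h1 _; apply: eq_bigr => h2 _; apply: eq_bigr => h3 _.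
      rewrite /Ind /inflate /= !xpair_eqE eqxx iG [g2 == g1]eq_sym (negbTE n12) /=.
      rewrite [eG g2 g1]sG.
      by case: (h1 == h3); case: (eH h1 h3); case: (eG g1 g2); case: a; case: b; case: c.
    rewrite sum3_mull drop2 -/(Dn eH b) n12 /=; ring.
case: (eqVneq g2 g3) => [<- | n23].
  - rewrite ?eqxx ?(negbTE n12) Ind0_23 /=.
    have -> : \sum_h1 \sum_h2 \sum_h3 Ind (inflate eG eH) a b c (g1,h1) (g2,h2) (g2,h3)
       = \sum_(h1 : U) \sum_h2 \sum_h3 ((((h2 != h3) && (eH h2 h3 == c)) : nat) *
            ((((g1 != g2) && (eG g1 g2 == a)) : nat) * (a == b))).
      apply: eq_bigr => h1 _; apply: eq_bigr => h2 _; apply: eq_bigr => h3 _.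
      rewrite /Ind /inflate /= !xpair_eqE ?eqxx iG ?(negbTE n12) /=.
      by case: (h2 == h3); case: (eH h2 h3); case: (eG g1 g2); case: a; case: b; case: c.
    rewrite sum3_mull drop1 -/(Dn eH c) n12 /=; ring.
rewrite ?(negbTE n12) ?(negbTE n13) ?(negbTE n23) /=.
have -> : \sum_h1 \sum_h2 \sum_h3 Ind (inflate eG eH) a b c (g1,h1) (g2,h2) (g3,h3)
   = \sum_(h1 : U) \sum_(h2 : U) \sum_(h3 : U) Ind eG a b c g1 g2 g3.
  apply: eq_bigr => h1 _; apply: eq_bigr => h2 _; apply: eq_bigr => h3 _.
  rewrite /Ind /inflate /= !xpair_eqE (negbTE n12) (negbTE n13) (negbTE n23) /=.
  by rewrite ?orbF.
rewrite const3; ring.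
Qed.

Lemma sum_eqm (T : finType) (x : T) (c : nat) : \sum_y ((x == y) * c) = c.
Proof.
rewrite (@sum_pick _ x) ?eqxx ?mul1n // => y ny; by rewrite eq_sym (negbTE ny).
Qed.

Lemma sum3_add (T : finType) (F G : T -> T -> T -> nat) :
  \sum_g1 \sum_g2 \sum_g3 (F g1 g2 g3 + G g1 g2 g3) =
  \sum_g1 \sum_g2 \sum_g3 F g1 g2 g3 + \sum_g1 \sum_g2 \sum_g3 G g1 g2 g3.
Proof.
rewrite -big_split; apply: eq_bigr => ? _; rewrite -big_split; apply: eq_bigr => ? _.
by rewrite -big_split.
Qed.

Lemma S1 (T : finType) C :
  \sum_(g1 : T) \sum_(g2 : T) \sum_(g3 : T) ((g1 == g2) * ((g2 == g3) * C)) = #|T| * C.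
Proof.
rewrite -sumc; apply: eq_bigr => g1 _.
rewrite (eq_bigr (fun g2 => (g1 == g2) * C)) ?sum_eqm // => g2 _.
by rewrite -big_distrr sum_eqm.
Qed.
Lemma S2 (T : finType) (X : T -> T -> nat) K :
  \sum_(g1 : T) \sum_(g2 : T) \sum_(g3 : T) ((g1 == g2) * (X g1 g3 * K)) =
  (\sum_g1 \sum_g3 X g1 g3) * K.
Proof.
rewrite big_distrl; apply: eq_bigr => g1 _.
rewrite (eq_bigr (fun g2 => (g1 == g2) * \sum_g3 (X g1 g3 * K))).
  by rewrite sum_eqm big_distrl.
by move=> g2 _; rewrite -big_distrr.
Qed.
Lemma S3 (T : finType) (X : T -> T -> nat) K :
  \sum_(g1 : T) \sum_(g2 : T) \sum_(g3 : T) ((g1 == g3) * (X g1 g2 * K)) =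
  (\sum_g1 \sum_g2 X g1 g2) * K.
Proof.
rewrite big_distrl; apply: eq_bigr => g1 _; rewrite big_distrl; apply: eq_bigr => g2 _.
by rewrite sum_eqm.
Qed.
Lemma S4 (T : finType) (X : T -> T -> nat) K :
  \sum_(g1 : T) \sum_(g2 : T) \sum_(g3 : T) ((g2 == g3) * (X g1 g2 * K)) =
  (\sum_g1 \sum_g2 X g1 g2) * K.
Proof.
rewrite big_distrl; apply: eq_bigr => g1 _; rewrite big_distrl; apply: eq_bigr => g2 _.
by rewrite sum_eqm.
Qed.

Lemma Dn_alt (T : finType) (e : rel T) a :
  \sum_g1 \sum_g2 (((g1 != g2) && (e g1 g2 == a)) : nat) = Dn e a.
Proof. by []. Qed.

Lemma Cnt_infl (T U : finType) (eG : rel T) (eH : rel U) a b c :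
  symmetric eG -> irreflexive eG ->
  Cnt (inflate eG eH) a b c =
    #|T| * Cnt eH a b c
  + (Dn eG b * ((b == c) * (Dn eH a * #|U|)) + Dn eG a * ((a == c) * (Dn eH b * #|U|))
     + Dn eG a * ((a == b) * (Dn eH c * #|U|)))
  + Cnt eG a b c * #|U| ^ 3.
Proof.
move=> sG iG.
rewrite {1}/Cnt reorder.
rewrite (eq_bigr _ (fun g1 _ => eq_bigr _ (fun g2 _ => eq_bigr _ (fun g3 _ =>
          Vform eH a b c g1 g2 g3 sG iG)))).
rewrite !sum3_add S1 S2 S3 S4 sum3_mull !Dn_alt.
rewrite -/(Cnt eG a b c). ring.
Qed.

Lemma reorder2 (T U : finType) (F : T * U -> T * U -> nat) :
  \sum_x \sum_y F x y = \sum_g1 \sum_g2 \sum_h1 \sum_h2 F (g1, h1) (g2, h2).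
Proof.
rewrite sum_pair; apply: eq_bigr => g1 _.
transitivity (\sum_h1 \sum_g2 \sum_h2 F (g1,h1) (g2,h2)).
  by apply: eq_bigr => h1 _; rewrite sum_pair.
exact: exchange_big.
Qed.

Lemma Dn_infl (T U : finType) (eG : rel T) (eH : rel U) a :
  irreflexive eG ->
  Dn (inflate eG eH) a = #|T| * Dn eH a + Dn eG a * (#|U| * #|U|).
Proof.
move=> iG; rewrite {1}/Dn reorder2.
transitivity (\sum_g1 \sum_g2 ((g1 == g2) * Dn eH a
      + (((g1 != g2) && (eG g1 g2 == a)) : nat) * (#|U| * #|U|))).
  apply: eq_bigr => g1 _; apply: eq_bigr => g2 _.
  case: (eqVneq g1 g2) => [<- | n12] /=.
    rewrite mul1n addn0; apply: eq_bigr => h1 _; apply: eq_bigr => h2 _.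
    by rewrite /inflate /= xpair_eqE eqxx iG.
  rewrite mul0n add0n /=.
  rewrite (eq_bigr (fun _ => #|U| * (eG g1 g2 == a))); last first.
    move=> h1 _; rewrite -sumc; apply: eq_bigr => h2 _.
    by rewrite /inflate /= xpair_eqE (negbTE n12) /= orbF.
  rewrite sumc; ring.
transitivity (\sum_(g1:T) (Dn eH a +
   (\sum_g2 (((g1 != g2) && (eG g1 g2 == a)) : nat)) * (#|U|*#|U|))).
  by apply: eq_bigr => g1 _; rewrite big_split /= sum_eqm big_distrl.
by rewrite big_split /= sumc -big_distrl.
Qed.

Lemma Dn_sum (T : finType) (e : rel T) :
  Dn e true + Dn e false = #|T| * #|T|.-1.
Proof.
rewrite /Dn -big_split /= -sumc; apply: eq_bigr => x _.
rewrite -big_split /=.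
rewrite (eq_bigr (fun y => ((x != y) : nat))); last first.
  by move=> y _; case: (x != y); case: (e x y).
rewrite sum_bool.
have -> : [set y | x != y] = [set~ x] by apply/setP => y; rewrite !inE eq_sym.
by rewrite cardsC1.
Qed.

Lemma bin2E m : 'C(m, 2) * 2 = m * m.-1.
Proof. by rewrite -[2 in LHS]/(2`!) bin_ffact ffactnS ffactn1. Qed.

Lemma rat_cancel (a b c : nat) : (0 < c)%N ->
  ((a%:R / c%:R : rat) = b%:R / c%:R)%R -> a = b.
Proof.
move=> c0; have cn : (c%:R != 0 :> rat)%R by rewrite pnatr_eq0 -lt0n.
move/eqP; rewrite eqr_div // -!natrM eqr_nat eqn_pmul2r //; by move/eqP.
Qed.

Lemma rat_half (a c : nat) : (0 < c)%N ->
  ((a%:R / c%:R : rat) = 1 / 2%:R)%R <-> a * 2 = c.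
Proof.
move=> c0; have cn : (c%:R != 0 :> rat)%R by rewrite pnatr_eq0 -lt0n.
have tn : (2%:R != 0 :> rat)%R by rewrite pnatr_eq0.
split.
  by move/eqP; rewrite eqr_div // GRing.mul1r -natrM eqr_nat => /eqP.
by move=> E; apply/eqP; rewrite eqr_div // GRing.mul1r -natrM eqr_nat E.
Qed.

Lemma densityE (T : finType) (e : rel T) k (F : rel 'I_k) :
  density e F = ((setc e F)%:R / ('C(#|T|, k))%:R)%R.
Proof. by []. Qed.

Lemma facts (T : finType) (e : rel T) : simple_graph e -> almost3sym e ->
  [/\ Dn e true = 'C(#|T|, 2), Dn e false = Dn e true,
      Cnt e true true true = Cnt e false false false &
      Cnt e true false true = Cnt e true false false].
Proof.
move=> [se ie] [hT [d2 [d3 dP]]].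
have c2 : (0 < 'C(#|T|, 2))%N by rewrite bin_gt0; apply: leq_trans hT.
have c3 : (0 < 'C(#|T|, 3))%N by rewrite bin_gt0.
have D1 : Dn e true = 'C(#|T|, 2).
  move: d2; rewrite densityE rat_half // => <-.
  by rewrite -(@mapc2 _ e K2 se ie symK2 irrK2) -setc_aut autK2.
split => //.
- have := Dn_sum e; rewrite D1 -bin2E => H; lia.
- move: d3; rewrite !densityE => /(rat_cancel c3) d3.
  have E1 := @mapc3 _ e K3 se ie symK3 irrK3; have E2 := @mapc3 _ e coK3 se ie symcoK3 irrcoK3.
  simpl in E1, E2.
  by rewrite -E1 -E2 -!setc_aut autK3 autcoK3 d3.
- move: dP; rewrite !densityE => /(rat_cancel c3) dP.
  have E1 := @mapc3 _ e P3 se ie symP3 irrP3; have E2 := @mapc3 _ e K2K1 se ie symK2K1 irrK2K1.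
  simpl in E1, E2.
  by rewrite -E1 -E2 -!setc_aut autP3 autK2K1 dP.
Qed.

Theorem mainTheorem17 (T U : finType) (eG : rel T) (eH : rel U) :
  simple_graph eG -> simple_graph eH ->
  (3 <= #|T|)%N -> (3 <= #|U|)%N ->
  almost3sym eG -> almost3sym eH ->
  almost3sym (inflate eG eH).
Proof.
move=> sGp sHp hT hU aG aH.
case: (facts sGp aG) => G1 G0 G3 GP.
case: (facts sHp aH) => H1 H0 H3 HP.
case: sGp => sG iG; case: sHp => sH iH.
have sI : symmetric (inflate eG eH).
  move=> x y; rewrite /inflate sG [x.1 == y.1]eq_sym [eH x.2 y.2]sH //.
have iI : irreflexive (inflate eG eH).
  by move=> x; rewrite /inflate iG eqxx iH.
have hI : (3 <= #|{: T * U}|)%N.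
  rewrite card_prod; apply: leq_trans hT _; rewrite leq_pmulr //; lia.
have cI3 : (0 < 'C(#|{: T * U}|, 3))%N by rewrite bin_gt0.
have cI2 : (0 < 'C(#|{: T * U}|, 2))%N by rewrite bin_gt0; apply: leq_trans hI.
split => //; split; [|split].
- rewrite densityE rat_half //.
  have := setc_aut (inflate eG eH) K2; rewrite autK2 (@mapc2 _ _ K2 sI iI symK2 irrK2) /= => ->.
  rewrite Dn_infl // card_prod G1 H1.
  apply/eqP; rewrite -(eqn_pmul2r (_ : 0 < 2)) //; apply/eqP.
  have := bin2E (#|T| * #|U|); have := bin2E #|T|; have := bin2E #|U|.
  nia.
- rewrite !densityE; congr (_%:R / _)%R.
  have E1 := setc_aut (inflate eG eH) K3; rewrite autK3 (@mapc3 _ _ K3 sI iI symK3 irrK3) /= in E1.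
  have E2 := setc_aut (inflate eG eH) coK3; rewrite autcoK3 (@mapc3 _ _ coK3 sI iI symcoK3 irrcoK3) /= in E2.
  apply/eqP; rewrite -(eqn_pmul2r (_ : 0 < 6)) //; apply/eqP.
  rewrite E1 E2 !Cnt_infl // G0 H0 G3 H3 /=; ring.
- rewrite !densityE; congr (_%:R / _)%R.
  have E1 := setc_aut (inflate eG eH) P3; rewrite autP3 (@mapc3 _ _ P3 sI iI symP3 irrP3) /= in E1.
  have E2 := setc_aut (inflate eG eH) K2K1; rewrite autK2K1 (@mapc3 _ _ K2K1 sI iI symK2K1 irrK2K1) /= in E2.
  apply/eqP; rewrite -(eqn_pmul2r (_ : 0 < 2)) //; apply/eqP.
  rewrite E1 E2 !Cnt_infl // G0 H0 GP HP /=; ring.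
Qed.
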